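(* For every $k\in\mathcal K$, the map $S\to\mathbb Z$, $s\mapsto d_k^{ur,\dagger}(s)$, is odd dominant.
   Context: Fix a prime $p\ge7$ and $k_0\in\{2,\dots,p\}$. $\{n\}$ is the residue of $n$ mod $p-1$ in $\{0,\dots,p-2\}$. $\mathcal K=\{k\ge2:k\equiv k_0\pmod{p-1}\}$, $k_\bullet=(k-k_0)/(p-1)$. For $s\in\{0,\dots,p-2\}$: $a_s=\{k_0-2-2s\}$, $\delta_s=\lfloor\frac{s+\{a_s+s\}}{p-1}\rfloor$; if $a_s+s<p-1$, $t_1^{(s)}=s+\delta_s$, $t_2^{(s)}=a_s+s+\delta_s+2$; otherwise $t_1^{(s)}=\{a_s+s\}+\delta_s+1$, $t_2^{(s)}=s+\delta_s+1$. For $k\in\mathcal K$: $d_k^{ur,\dagger}(s)=\lfloor\frac{k_\bullet-t_1^{(s)}}{p+1}\rfloor+\lfloor\frac{k_\bullet-t_2^{(s)}}{p+1}\rfloor+2+\delta_s$. $S=\{\lceil\frac{k_0+1}{2}\rceil,\dots,\lfloor\frac{k_0+p-4}{2}\rfloor\}$. For $\phi:S\to\mathbb Z$, a pair $s<s'$ in $S$ is $\phi$-regular if $|\phi(s)-\phi(s')|\le1$ and, whenever $\phi(s)\neq\phi(s')$, $\phi(s')$ is odd; $\phi$ is odd dominant if every pair $s<s'$ in $S$ is $\phi$-regular. *)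

(* Defs.v *)
From mathcomp Require Import all_boot all_order all_algebra.
Set Implicit Arguments. Unset Strict Implicit. Unset Printing Implicit Defensive.
Import Order.TTheory GRing.Theory Num.Theory.
Local Open Scope ring_scope.

Definition resid (p : nat) (n : int) : int := (n %% (p.-1)%:Z)%Z.

Definition a_s (p k0 s : nat) : int := resid p (k0%:Z - 2 - 2 * s%:Z).

Definition delta_s (p k0 s : nat) : int :=
  ((s%:Z + resid p (a_s p k0 s + s%:Z)) %/ (p.-1)%:Z)%Z.

Definition t1 (p k0 s : nat) : int :=
  if a_s p k0 s + s%:Z < (p.-1)%:Z then s%:Z + delta_s p k0 s
  else resid p (a_s p k0 s + s%:Z) + delta_s p k0 s + 1.

Definition t2 (p k0 s : nat) : int :=
  if a_s p k0 s + s%:Z < (p.-1)%:Z then a_s p k0 s + s%:Z + delta_s p k0 s + 2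
  else s%:Z + delta_s p k0 s + 1.

Definition kbullet (p k0 k : nat) : int := ((k%:Z - k0%:Z) %/ (p.-1)%:Z)%Z.

Definition d_ur (p k0 k s : nat) : int :=
  ((kbullet p k0 k - t1 p k0 s) %/ (p.+1)%:Z)%Z
  + ((kbullet p k0 k - t2 p k0 s) %/ (p.+1)%:Z)%Z + 2 + delta_s p k0 s.

(* S = {ceil((k0+1)/2), ..., floor((k0+p-4)/2)} *)
Definition in_S (p k0 s : nat) : bool :=
  ((k0 + 2)./2 <= s <= (k0 + p - 4)./2)%N.

Definition phi_regular (phi : nat -> int) (s s' : nat) : Prop :=
  `|phi s - phi s'| <= 1 /\ (phi s <> phi s' -> ~~ (2 %| phi s')%Z).

Definition odd_dominant (S : nat -> bool) (phi : nat -> int) : Prop :=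
  forall s s', S s -> S s' -> (s < s')%N -> phi_regular phi s s'.

(* Main.v *)
Require Import Defs.
From mathcomp Require Import all_boot all_order all_algebra.
From mathcomp Require Import zify.
Import Order.TTheory GRing.Theory Num.Theory.

Section H.
Local Open Scope ring_scope.

Lemma fle1 (q x y : int) : 0 < q -> x <= y -> y < x + q ->
  (x %/ q)%Z <= (y %/ q)%Z /\ (y %/ q)%Z <= (x %/ q)%Z + 1.
Proof.
move=> q0 xy yq; split; first by apply: lez_pdiv2r => //; exact: ltW.
have h : (y %/ q)%Z <= ((1 * q + x) %/ q)%Z by apply: lez_pdiv2r; [exact: ltW| lia].
by rewrite divzMDl ?gt_eqF // addrC in h.
Qed.

Lemma parity (A : int) : (2 %| A * 2)%Z /\ ~~ (2 %| A * 2 + 1)%Z.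
Proof. lia. Qed.

Lemma dform (p k0 k s : nat) : (7 <= p)%N -> (2 <= k0 <= p)%N ->
  (k0 + 1 <= 2 * s)%N -> (2 * s <= k0 + p - 4)%N ->
  d_ur p k0 k s = ((kbullet p k0 k - 1 - s%:Z) %/ (p.+1)%:Z)%Z
     + ((kbullet p k0 k - k0%:Z + 1 + s%:Z) %/ (p.+1)%:Z)%Z + 2.
Proof.
move=> p7 hk0 hs1 hs2.
have m0 : (p.-1)%:Z != 0 by lia.
have ha : a_s p k0 s = k0%:Z + p%:Z - 3 - 2 * s%:Z.
  rewrite /a_s /resid.
  have -> : k0%:Z - 2 - 2 * s%:Z = (-1) * (p.-1)%:Z + (k0%:Z + p%:Z - 3 - 2 * s%:Z) by lia.
  rewrite modzMDl modz_small //; lia.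
have q0 : (p.+1)%:Z != 0 by lia.
rewrite /d_ur.
case: (leqP (s + 2) k0) => hsk.
- have hr : resid p (a_s p k0 s + s%:Z) = k0%:Z - 2 - s%:Z.
    rewrite /resid ha.
    have -> : k0%:Z + p%:Z - 3 - 2 * s%:Z + s%:Z = (k0%:Z - 2 - s%:Z) + (p.-1)%:Z by lia.
    rewrite modzDr modz_small //; lia.
  have hd : delta_s p k0 s = 0.
    rewrite /delta_s hr divz_small //; lia.
  have hc : (a_s p k0 s + s%:Z < (p.-1)%:Z) = false by rewrite ha; lia.
  rewrite /t1 /t2 hc hr hd.
  have -> : kbullet p k0 k - (k0%:Z - 2 - s%:Z + 0 + 1) = kbullet p k0 k - k0%:Z + 1 + s%:Z by lia.
  have -> : kbullet p k0 k - (s%:Z + 0 + 1) = kbullet p k0 k - 1 - s%:Z by lia.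
  lia.
- have hr : resid p (a_s p k0 s + s%:Z) = k0%:Z + p%:Z - 3 - s%:Z.
    rewrite /resid ha modz_small //; lia.
  have hd : delta_s p k0 s = 1.
    rewrite /delta_s hr.
    have -> : s%:Z + (k0%:Z + p%:Z - 3 - s%:Z) = 1 * (p.-1)%:Z + (k0%:Z - 2) by lia.
    rewrite divzMDl // divz_small //; lia.
  have hc : (a_s p k0 s + s%:Z < (p.-1)%:Z) = true by rewrite ha; lia.
  rewrite /t1 /t2 hc hd ha.
  have -> : kbullet p k0 k - (s%:Z + 1) = kbullet p k0 k - 1 - s%:Z by lia.
  have -> : kbullet p k0 k - (k0%:Z + p%:Z - 3 - 2 * s%:Z + s%:Z + 1 + 2)
     = (-1) * (p.+1)%:Z + (kbullet p k0 k - k0%:Z + 1 + s%:Z) by lia.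
  rewrite divzMDl //; lia.
Qed.

Lemma inS_bounds (p k0 s : nat) : in_S p k0 s ->
  (k0 + 1 <= 2 * s)%N /\ (2 * s <= k0 + p - 4)%N.
Proof.
move=> /andP[h1 h2].
have e1 := odd_double_half (k0 + 2).
have e2 := odd_double_half (k0 + p - 4).
have b1 := leq_b1 (odd (k0 + 2)).
have b2 := leq_b1 (odd (k0 + p - 4)).
rewrite -!muln2 in e1 e2.
have o : odd (k0 + 2) = odd k0 by rewrite oddD /= addbF.
split; last by lia.
move: e1 b1; rewrite o; case: (odd k0) => /= e1 b1; lia.
Qed.

End H.

Theorem mainTheorem8 (p k0 k : nat) :
  prime p -> (7 <= p)%N -> (2 <= k0 <= p)%N ->
  (2 <= k)%N -> k = k0 %[mod p.-1] ->
  odd_dominant (in_S p k0) (d_ur p k0 k).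
Proof.
move=> _ p7 hk0 _ _ s s' Hs Hs' lt.
have [a1 a2] := inS_bounds _ _ _ Hs.
have [b1 b2] := inS_bounds _ _ _ Hs'.
rewrite /phi_regular !dform //.
set kb := kbullet p k0 k.
have q0 : (0 < (p.+1)%:Z)%R by lia.
have [h1 _] := fle1 _ (kb - 1 - s'%:Z) (kb - 1 - s%:Z) q0 ltac:(lia) ltac:(lia).
have [h2 _] := fle1 _ (kb - 1 - s%:Z) (kb - k0%:Z + 1 + s%:Z) q0 ltac:(lia) ltac:(lia).
have [h3 _] := fle1 _ (kb - k0%:Z + 1 + s%:Z) (kb - k0%:Z + 1 + s'%:Z) q0 ltac:(lia) ltac:(lia).
have [_ h4] := fle1 _ (kb - 1 - s'%:Z) (kb - k0%:Z + 1 + s'%:Z) q0 ltac:(lia) ltac:(lia).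
move: h1 h2 h3 h4.
set A := ((kb - 1 - s'%:Z) %/ _)%Z.
set B := ((kb - 1 - s%:Z) %/ _)%Z.
set C := ((kb - k0%:Z + 1 + s%:Z) %/ _)%Z.
set D := ((kb - k0%:Z + 1 + s'%:Z) %/ _)%Z.
move=> h1 h2 h3 h4.
split; first lia.
move=> ne; lia.
Qed.
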